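(* Fix $h\in\{2,\dots,H\}$ and suppose $\Psi_{h-1}$ is an $\alpha$-policy cover of $\mathcal{S}_{h-1}$ with $|\Psi_{h-1}|\le N$. Then for every $s\in\mathcal{S}_h$, $\rho_h(s)\ge\frac{\alpha\,\eta(s)}{N|\mathcal{A}|}$.
   Context: Block MDP: horizon $H$; finite latent states $\mathcal{S}=\sqcup_h\mathcal{S}_h$; countable observations $\mathcal{X}=\sqcup_h\mathcal{X}_h$; finite actions $\mathcal{A}$; start distribution $\mu$; transitions $T(\cdot\mid s,a)\in\Delta(\mathcal{S}_{h+1})$ for $s\in\mathcal{S}_h$; emissions $q(\cdot\mid s)\in\Delta(\mathcal{X}_h)$ with disjoint supports, decoder $g^\star$. Policies map $\mathcal{X}\to\Delta(\mathcal{A})$; $\Pi$ a policy class, $\Pi_{NS}=\Pi^H$ non-stationary policies. $\mathbb{P}_\pi[s]$ is the probability that $\pi$'s trajectory visits $s$; $\eta(s)=\max_{\pi\in\Pi_{NS}}\mathbb{P}_\pi[s]$. A finite set $\Psi$ of policies is an $\alpha$-policy cover of $\mathcal{S}_t$ if $\max_{\pi\in\Psi}\mathbb{P}_\pi[s]\ge\alpha\eta(s)$ for all $s\in\mathcal{S}_t$. $\rho_h(s)$ is the probability that $g^\star(x_h)=s$ when a policy $\pi$ is chosen uniformly from $\Psi_{h-1}$, followed for steps $1,\dots,h-2$ to reach $x_{h-1}$, then an action $a_{h-1}\sim\mathrm{Unf}(\mathcal{A})$ is taken. *)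

(* Defs.v *)
From HB Require Import structures.
From mathcomp Require Import all_boot all_order all_algebra.
From mathcomp Require Import boolp classical_sets functions reals ereal esum.
Set Implicit Arguments. Unset Strict Implicit. Unset Printing Implicit Defensive.
Import Order.TTheory GRing.Theory Num.Theory.
Local Open Scope classical_set_scope.
Local Open Scope ring_scope.

Definition csum (R : realType) (T : choiceType) (f : T -> R) : R :=
  fine (\esum_(x in [set: T]) (f x)%:E).

Record blockMDP (R : realType) (H : nat) := BlockMDP {
  St : finType;
  Obs : countType;
  Act : finType;
  slay : St -> nat;             (* s \in S_(slay s) *)
  olay : Obs -> nat;            (* x \in X_(olay x) *)
  mu : St -> R;
  T : St -> Act -> St -> R;     (* T s a s' = T(s' | s, a) *)
  q : St -> Obs -> R;           (* q s x = q(x | s) *)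
  dec : Obs -> St;
  slay_range : forall s, (1 <= slay s <= H)%N;
  mu_ge0 : forall s, 0 <= mu s;
  mu_sum1 : \sum_(s : St) mu s = 1;
  mu_supp : forall s, 0 < mu s -> slay s = 1%N;
  T_ge0 : forall s a s', 0 <= T s a s';
  T_sum1 : forall s a, (slay s < H)%N -> \sum_(s' : St) T s a s' = 1;
  T_supp : forall s a s', 0 < T s a s' -> slay s' = (slay s).+1;
  q_ge0 : forall s x, 0 <= q s x;
  q_sum1 : forall s, (\esum_(x in [set: Obs]) (q s x)%:E = 1)%E;
  q_supp : forall s x, 0 < q s x -> olay x = slay s;
  (* disjoint supports of emissions, witnessed by the decoder g* *)
  dec_spec : forall s x, 0 < q s x -> dec x = s
}.

Section Defs.
Variables (R : realType) (H : nat) (M : blockMDP R H).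

Definition policy := Obs M -> Act M -> R.
Definition isPolicy (pi : policy) : Prop :=
  (forall x a, 0 <= pi x a) /\ (forall x, \sum_(a : Act M) pi x a = 1).

(* Non-stationary policies: pi t is used at step t (t = 1..H). *)
Definition nspolicy := nat -> policy.

Definition PiNS (Pi : set policy) : set nspolicy :=
  [set pi | forall t, (1 <= t <= H)%N -> Pi (pi t)].

(* occ pi t s = probability that the latent state at step t is s, when
   following pi: s_1 ~ mu, x_t ~ q(.|s_t), a_t ~ pi_t(.|x_t),
   s_(t+1) ~ T(.|s_t,a_t). *)
Fixpoint occ (pi : nspolicy) (t : nat) (s : St M) : R :=
  match t with
  | 0 => 0
  | t'.+1 =>
    if t' is 0 then mu s
    else \sum_(s0 : St M) occ pi t' s0 *
           csum (fun x => q s0 x *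
                   \sum_(a : Act M) pi t' x a * T s0 a s)
  end.

(* P_pi[s] : probability that the trajectory of pi visits s
   (states of layer h can only be visited at step h). *)
Definition visitP (pi : nspolicy) (s : St M) : R := occ pi (slay s) s.

(* eta(s) = max over Pi_NS of P_pi[s] (taken as a supremum). *)
Definition etaS (Pi : set policy) (s : St M) : R :=
  sup [set visitP pi s | pi in PiNS Pi].

(* Psi (a finite set of n policies, given as an injective family) is an
   alpha-policy cover of S_t. *)
Definition policy_cover (Pi : set policy) n (Psi : 'I_n -> nspolicy)
  (alpha : R) (t : nat) : Prop :=
  forall s : St M, slay s = t ->
    \big[Num.max/0]_(i < n) visitP (Psi i) s >= alpha * etaS Pi s.

(* rho_h(s): pi uniform in Psi, followed for steps 1..h-2 (reaching
   s_(h-1) and x_(h-1) ~ q(.|s_(h-1))), then a_(h-1) ~ Unf(A),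
   s_h ~ T(.|s_(h-1),a_(h-1)), x_h ~ q(.|s_h); probability that g*(x_h) = s. *)
Definition rho n (Psi : 'I_n -> nspolicy) (h : nat) (s : St M) : R :=
  n%:R^-1 * \sum_(i < n) \sum_(s1 : St M) occ (Psi i) h.-1 s1 *
    csum (fun x => q s1 x *
      (#|Act M|%:R^-1 * \sum_(a : Act M) \sum_(s2 : St M) T s1 a s2 *
          csum (fun y => q s2 y * (dec y == s)%:R))).

End Defs.

(* Main.v *)
Require Import Defs.
From HB Require Import structures.
From mathcomp Require Import all_boot all_order all_algebra.
From mathcomp Require Import boolp classical_sets functions reals ereal esum.
From mathcomp Require Import fsbigop zify ring.
Import Order.TTheory GRing.Theory Num.Theory.
Local Open Scope classical_set_scope.
Local Open Scope ring_scope.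

Lemma esumZ (R : realType) (T : choiceType) (a : T -> \bar R) (c : R) :
  0 <= c -> (forall x, (0 <= a x)%E) ->
  (\esum_(x in [set: T]) (c%:E * a x) = c%:E * \esum_(x in [set: T]) a x)%E.
Proof.
move=> c0 a0; rewrite /esum -ereal_supZl//; last first.
  by apply/set0P; exists 0%E; exists set0; [exact: fsets_set0|rewrite fsbig_set0].
congr ereal_sup; apply/seteqP; split=> y /=.
  by move=> [A hA <-]; exists (\sum_(i \in A) a i)%E; [by exists A|rewrite ge0_mule_fsumr].
by move=> [z [A hA <-] <-]; exists A => //; rewrite ge0_mule_fsumr.
Qed.

Lemma csum_ge0 (R : realType) (T : choiceType) (f : T -> R) :
  (forall x, 0 <= f x) -> 0 <= csum f.
Proof. by move=> f0; apply: fine_ge0; apply: esum_ge0 => x _; rewrite lee_fin. Qed.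

Lemma csum_le (R : realType) (T : choiceType) (f g : T -> R) :
  (forall x, 0 <= f x <= g x) ->
  (\esum_(x in [set: T]) (g x)%:E)%E \is a fin_num -> csum f <= csum g.
Proof.
move=> fg gfin; rewrite /csum.
have le : (\esum_(x in [set: T]) (f x)%:E <= \esum_(x in [set: T]) (g x)%:E)%E.
  by apply: le_esum => x _; rewrite lee_fin; case/andP: (fg x).
apply: fine_le => //.
have f0 : (0 <= \esum_(x in [set: T]) (f x)%:E)%E.
  by apply: esum_ge0 => x _; rewrite lee_fin; case/andP: (fg x).
rewrite ge0_fin_numE //; apply: (le_lt_trans le).
by move: gfin; rewrite fin_numE => /andP[_]; rewrite ltey.
Qed.

Lemma csum_qc (R : realType) (H : nat) (M : blockMDP R H) (s : St M) (c : R) :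
  0 <= c -> csum (fun x => q s x * c) = c.
Proof.
move=> c0; rewrite /csum.
under eq_esum => x _ do rewrite mulrC EFinM.
by rewrite esumZ ?q_sum1 ?mule1 // => x; rewrite lee_fin q_ge0.
Qed.

Lemma csum_qc_fin (R : realType) (H : nat) (M : blockMDP R H) (s : St M) (c : R) :
  0 <= c -> (\esum_(x in [set: Obs M]) (q s x * c)%:E)%E \is a fin_num.
Proof.
move=> c0; under eq_esum => x _ do rewrite mulrC EFinM.
by rewrite esumZ ?q_sum1 ?mule1 // => x; rewrite lee_fin q_ge0.
Qed.

Section MDP.
Variables (R : realType) (H : nat) (M : blockMDP R H).

Lemma T_zero (s : St M) a s' : slay s' != (slay s).+1 -> T s a s' = 0.
Proof.
move=> hs; apply/eqP; rewrite eq_le T_ge0 andbT leNgt; apply/negP => /T_supp.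
by move/eqP; rewrite (negbTE hs).
Qed.

Lemma T_le1 (s : St M) a s' : T s a s' <= 1.
Proof.
case: (ltnP (slay s) H) => hl.
  rewrite -(T_sum1 a hl) (bigD1 s') //= lerDl sumr_ge0 // => i _; exact: T_ge0.
rewrite T_zero ?ler01 //; apply/eqP => e.
by move: (slay_range s'); rewrite e => /andP[_]; rewrite ltnNge hl.
Qed.

Lemma mu_le1 (s : St M) : mu s <= 1.
Proof. by rewrite -(mu_sum1 M) (bigD1 s) //= lerDl sumr_ge0 // => i _; exact: mu_ge0. Qed.

Lemma pol_le1 (p : policy M) x a : isPolicy p -> p x a <= 1.
Proof.
case=> p0 p1; rewrite -(p1 x) (bigD1 a) //= lerDl sumr_ge0 //.
Qed.

Lemma inner_bnd (p : policy M) (s0 s : St M) x : isPolicy p ->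
  0 <= \sum_(a : Act M) p x a * T s0 a s <= \sum_(a : Act M) T s0 a s.
Proof.
case=> p0 p1; apply/andP; split.
  by apply: sumr_ge0 => a _; apply: mulr_ge0 => //; exact: T_ge0.
apply: ler_sum => a _; rewrite -[leRHS]mul1r ler_wpM2r ?T_ge0 //.
exact: (@pol_le1 p x a).
Qed.

Lemma inner_le1 (p : policy M) (s0 s : St M) x : isPolicy p ->
  0 <= \sum_(a : Act M) p x a * T s0 a s <= 1.
Proof.
case=> p0 p1; apply/andP; split.
  by apply: sumr_ge0 => a _; apply: mulr_ge0 => //; exact: T_ge0.
rewrite -(p1 x); apply: ler_sum => a _; rewrite -[leRHS]mulr1 ler_wpM2l //.
exact: T_le1.
Qed.

Lemma csum_inner (p : policy M) (s0 s : St M) : isPolicy p ->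
  0 <= csum (fun x => q s0 x * \sum_(a : Act M) p x a * T s0 a s)
    <= \sum_(a : Act M) T s0 a s.
Proof.
move=> hp; have c0 : 0 <= \sum_(a : Act M) T s0 a s.
  by apply: sumr_ge0 => a _; exact: T_ge0.
apply/andP; split.
  apply: csum_ge0 => x; apply: mulr_ge0; first exact: q_ge0.
  by case/andP: (@inner_bnd p s0 s x hp).
rewrite -[leRHS](@csum_qc R H M s0) //; apply: csum_le; last exact: csum_qc_fin.
move=> x; case/andP: (@inner_bnd p s0 s x hp) => h1 h2.
by rewrite mulr_ge0 ?q_ge0 //= ler_wpM2l ?q_ge0.
Qed.

Lemma csum_inner1 (p : policy M) (s0 s : St M) : isPolicy p ->
  0 <= csum (fun x => q s0 x * \sum_(a : Act M) p x a * T s0 a s) <= 1.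
Proof.
move=> hp; apply/andP; split.
  apply: csum_ge0 => x; apply: mulr_ge0; first exact: q_ge0.
  by case/andP: (@inner_bnd p s0 s x hp).
rewrite -[leRHS](@csum_qc R H M s0) //; apply: csum_le; last exact: csum_qc_fin.
move=> x; case/andP: (@inner_le1 p s0 s x hp) => h1 h2.
by rewrite mulr_ge0 ?q_ge0 //= ler_wpM2l ?q_ge0.
Qed.

Lemma occ_bnd (pi : nspolicy M) t :
  (forall t', (1 <= t' < t)%N -> isPolicy (pi t')) ->
  forall s, 0 <= occ pi t s <= (#|St M|%:R + 1) ^+ t.
Proof.
elim: t => [|t IH] hpi s /=; first by rewrite lexx ler01.
case: t IH hpi => [|t] IH hpi.
  by rewrite mu_ge0 /= expr1 (le_trans (mu_le1 s)) // lerDr.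
have hp : isPolicy (pi t.+1) by apply: hpi; rewrite /= ltnSn.
have IH' := IH (fun t' ht' => hpi t' (ltac:(move: ht'; case/andP=> a b; rewrite a /=; exact: ltnW b))).
apply/andP; split.
  apply: sumr_ge0 => s0 _; apply: mulr_ge0; first by case/andP: (IH' s0).
  by case/andP: (@csum_inner1 _ s0 s hp).
apply: (@le_trans _ _ (\sum_(s0 : St M) (#|St M|%:R + 1) ^+ t.+1)).
  apply: ler_sum => s0 _; case/andP: (IH' s0) => o0 o1.
  case/andP: (@csum_inner1 _ s0 s hp) => c0 c1.
  by rewrite -[leRHS]mulr1; apply: ler_pM.
rewrite sumr_const [X in _ <= X]exprSr.
set C := (_ ^+ t.+1); rewrite -(mulr_natr C); apply: ler_wpM2l.
  by rewrite exprn_ge0 // addr_ge0.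
by rewrite lerDl.
Qed.


Lemma occ_ge0 (pi : nspolicy M) t s :
  (forall t', (1 <= t' < t)%N -> isPolicy (pi t')) -> 0 <= occ pi t s.
Proof. by move=> hp; case/andP: (@occ_bnd pi t hp s). Qed.

Variable Pi : set (policy M).
Hypothesis hPi : Pi `<=` @isPolicy R H M.

Lemma PiNS_valid (pi : nspolicy M) (s : St M) : PiNS Pi pi ->
  forall t', (1 <= t' < slay s)%N -> isPolicy (pi t').
Proof.
move=> hpi t' /andP[h1 h2]; apply: hPi; apply: hpi; rewrite h1 /=.
case/andP: (slay_range s) => _ h3; exact: ltnW (leq_trans h2 h3).
Qed.

Lemma eta_bounded (s : St M) :
  has_ubound [set visitP pi s | pi in PiNS Pi].
Proof.
exists ((#|St M|%:R + 1) ^+ slay s) => y [pi hpi <-].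
by case/andP: (@occ_bnd pi _ (@PiNS_valid pi s hpi) s).
Qed.

Lemma visit_le_eta (pi : nspolicy M) (s : St M) : PiNS Pi pi ->
  visitP pi s <= etaS Pi s.
Proof. by move=> hpi; apply: ub_le_sup; [exact: eta_bounded|exists pi]. Qed.

Lemma eta_ge0 (s : St M) : 0 <= etaS Pi s.
Proof.
have [[pi hpi]|e0] := pselect (exists pi, PiNS Pi pi).
  apply: le_trans (@visit_le_eta pi s hpi).
  by case/andP: (@occ_bnd pi _ (@PiNS_valid pi s hpi) s).
rewrite /etaS (_ : [set _ | _ in _] = set0) ?sup0 //.
by apply/seteqP; split => y // [pi hpi _]; apply: e0; exists pi.
Qed.

Lemma eta_le (s : St M) (E : R) : 0 <= E ->
  (forall pi, PiNS Pi pi -> visitP pi s <= E) -> etaS Pi s <= E.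
Proof.
move=> E0 hE.
have [[pi hpi]|e0] := pselect (exists pi, PiNS Pi pi).
  by apply: ge_sup; [exists (visitP pi s); exists pi|move=> y [p hp <-]; exact: hE].
rewrite /etaS (_ : [set _ | _ in _] = set0) ?sup0 //.
by apply/seteqP; split => y // [pi hpi _]; apply: e0; exists pi.
Qed.

Lemma max_le_sum n (F : 'I_n -> R) : (forall i, 0 <= F i) ->
  \big[Num.max/0]_(i < n) F i <= \sum_(i < n) F i.
Proof.
move=> F0.
suff : 0 <= \big[Num.max/0]_(i < n) F i <= \sum_(i < n) F i by case/andP.
apply: (big_ind2 (fun x y => 0 <= x <= y)); first by rewrite lexx.
  move=> x1 x2 y1 y2 /andP[a b] /andP[c d]; rewrite le_max a /= ge_max.
  rewrite (le_trans b) ?lerDl ?(le_trans c d) //=.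
  by rewrite (le_trans d) ?lerDr ?(le_trans a b).
by move=> i _; rewrite F0 lexx.
Qed.


Lemma csum_dec (s2 s : St M) :
  csum (fun y => q s2 y * (dec y == s)%:R) = (s2 == s)%:R.
Proof.
rewrite -[RHS](@csum_qc R H M s2) ?ler0n //; congr csum; apply/funext => y.
have := q_ge0 s2 y; rewrite le_eqVlt => /orP[/eqP <-|/dec_spec ->]; first by rewrite !mul0r.
by [].
Qed.

Lemma rhoE n (Psi : 'I_n -> nspolicy M) h s :
  rho Psi h s = n%:R^-1 * \sum_(i < n) \sum_(s1 : St M) occ (Psi i) h.-1 s1 *
    (#|Act M|%:R^-1 * \sum_(a : Act M) T s1 a s).
Proof.
rewrite /rho; congr (_ * _); apply: eq_bigr => i _; apply: eq_bigr => s1 _.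
congr (_ * _).
have -> : \sum_(a : Act M) \sum_(s2 : St M) T s1 a s2 *
          csum (fun y => q s2 y * (dec y == s)%:R) = \sum_(a : Act M) T s1 a s.
  apply: eq_bigr => a _; under eq_bigr => s2 _ do rewrite csum_dec.
  rewrite (bigD1 s) //= eqxx mulr1 big1 ?addr0 // => s2 /negbTE ->.
  by rewrite mulr0.
apply: csum_qc; apply: mulr_ge0; first by rewrite invr_ge0 ler0n.
by apply: sumr_ge0 => a _; exact: T_ge0.
Qed.

Lemma occS (pi : nspolicy M) k s :
  occ pi k.+2 s = \sum_(s0 : St M) occ pi k.+1 s0 *
     csum (fun x => q s0 x * \sum_(a : Act M) pi k.+1 x a * T s0 a s).
Proof. by []. Qed.

Lemma main_sec (h : nat) (hh : (2 <= h <= H)%N)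
  (alpha : R) (N n : nat) (Psi : 'I_n -> nspolicy M)
  (Psi_valid : forall i t, isPolicy (Psi i t))
  (hN : (n <= N)%N)
  (hcover : policy_cover Pi Psi alpha h.-1) :
  forall s : St M, slay s = h ->
    rho Psi h s >= alpha * etaS Pi s / (N%:R * #|Act M|%:R).
Proof.
move=> s hs; rewrite rhoE.
case/andP: hh => h2 hH.
have [k ek] : exists k, h = k.+2 by exists h.-2; lia.
rewrite {}ek in hs hcover h2 hH *.
set K := fun s1 => \sum_(a : Act M) T s1 a s.
set c := fun s1 => #|Act M|%:R^-1 * K s1.
have K0 s1 : 0 <= K s1 by apply: sumr_ge0 => a _; exact: T_ge0.
have c0 s1 : 0 <= c s1 by apply: mulr_ge0; rewrite ?invr_ge0 ?ler0n.
have occ0 i t s1 : 0 <= occ (Psi i) t s1 by apply: occ_ge0 => t' _.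
have Klay s1 : slay s1 != k.+1 -> K s1 = 0.
  move=> hs1; apply: big1 => a _; apply: T_zero; apply/eqP => e.
  by move: hs1; rewrite -[k.+1]/(k.+2).-1 -hs e /= eqxx.
set S := \sum_(i < n) _.
have S0 : 0 <= S.
  by rewrite /S; apply: sumr_ge0 => i _; apply: sumr_ge0 => s1 _; apply: mulr_ge0; [exact: occ0|exact: c0].
have Eeta0 : 0 <= etaS Pi s by apply: eta_ge0.
have D0 : 0 <= (N%:R * #|Act M|%:R)^-1 :> R by rewrite invr_ge0 mulr_ge0 ?ler0n.
have [alpha0|alphap] := lerP alpha 0.
  apply: le_trans (_ : 0 <= _); last by apply: mulr_ge0 => //; rewrite invr_ge0 ler0n.
  by rewrite mulr_le0_ge0 // mulr_le0_ge0.
set E := \sum_(s1 : St M) etaS Pi s1 * K s1.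
have etaE : etaS Pi s <= E.
  apply: eta_le; first by apply: sumr_ge0 => s1 _; apply: mulr_ge0 => //; exact: eta_ge0.
  move=> pi hpi; rewrite /visitP hs occS.
  have hv := @PiNS_valid pi s hpi.
  apply: ler_sum => s0 _.
  have hp : isPolicy (pi k.+1) by apply: hv; rewrite hs /= ltnSn.
  case/andP: (@csum_inner (pi k.+1) s0 s hp) => i0 i1.
  have hocc : 0 <= occ pi k.+1 s0.
    apply: occ_ge0 => t' /andP[a b]; apply: hv; rewrite a hs /=; exact: ltnW.
  case: (eqVneq (slay s0) k.+1) => e.
    apply: ler_pM => //; have := @visit_le_eta pi s0 hpi; by rewrite /visitP e.
  have Ke := Klay s0 e; rewrite Ke mulr0.
  have z : csum (fun x => q s0 x * \sum_(a : Act M) pi k.+1 x a * T s0 a s) = 0.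
    by apply/le_anti; rewrite i0 andbT; move: i1; rewrite -/(K s0) Ke.
  by rewrite z mulr0.
have SE : alpha * #|Act M|%:R^-1 * E <= S.
  rewrite /S exchange_big /= /E mulr_sumr; apply: ler_sum => s1 _.
  rewrite -mulr_suml.
  case: (eqVneq (slay s1) k.+1) => e; last first.
    by have Ke := Klay s1 e; rewrite /K in Ke; rewrite /K Ke !mulr0.
  have hc := hcover s1 e; rewrite /= /visitP e in hc.
  have hm := le_trans hc (@max_le_sum _ (fun i => occ (Psi i) k.+1 s1) (fun i => occ0 i k.+1 s1)).
  apply: le_trans (ler_wpM2r (c0 s1) hm).
  by rewrite /c /K; rewrite le_eqVlt; apply/orP; left; apply/eqP; ring.
have hNn : N%:R^-1 * S <= n%:R^-1 * S.
  case: (posnP n) => [n0|npos].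
    have -> : S = 0 by rewrite /S big1 // => -[i hi]; exfalso; move: hi; rewrite n0.
    by rewrite !mulr0.
  apply: ler_wpM2r => //; rewrite lef_pV2 ?ler_nat // posrE ltr0n //.
  exact: leq_trans hN.
apply: le_trans hNn.
apply: (@le_trans _ _ (N%:R^-1 * (alpha * #|Act M|%:R^-1 * etaS Pi s))).
  rewrite invfM; rewrite le_eqVlt; apply/orP; left; apply/eqP; ring.
apply: ler_wpM2l; first by rewrite invr_ge0 ler0n.
apply: le_trans SE; apply: ler_wpM2l => //.
by rewrite mulr_ge0 ?invr_ge0 ?ler0n // ltW.
Qed.

End MDP.

Theorem mainTheorem9 (R : realType) (H : nat) (M : blockMDP R H)
  (Pi : set (policy M)) (hPi : Pi `<=` @isPolicy R H M)
  (h : nat) (hh : (2 <= h <= H)%N)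
  (alpha : R) (N n : nat) (Psi : 'I_n -> nspolicy M)
  (Psi_set : injective Psi)
  (Psi_valid : forall i t, isPolicy (Psi i t))
  (hN : (n <= N)%N)
  (hcover : policy_cover Pi Psi alpha h.-1) :
  forall s : St M, slay s = h ->
    rho Psi h s >= alpha * etaS Pi s / (N%:R * #|Act M|%:R).
Proof. exact: (@main_sec R H M Pi hPi h hh alpha N n Psi Psi_valid hN hcover). Qed.
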